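(* Let $t,s$ be two trees of $\mathcal{A}$ different from $|$, let $k$ be the number of internal vertices on the right-most branch of $t$ and $l$ the number of internal vertices on the left-most branch of $s$. Then $$t*s=\sum_{\sigma\in\mathrm{QSh}(k,l)}\sigma(t,s).$$
   Context: Trees: planar rooted trees in which every internal vertex has at least two children; the root vertex hangs from a trunk edge; leaves are edges without upper vertex; $|$ is the one-leaf tree. $\mathcal A$ is the $\mathbb K$-vector space with basis these trees, with products defined recursively: $x_0\vee\cdots\vee x_k$ ($k\ge1$) grafts trees left to right on a new root vertex; for $x=x^{(0)}\vee\cdots\vee x^{(k)}$, $y=y^{(0)}\vee\cdots\vee y^{(l)}$: $x\prec y=x^{(0)}\vee\cdots\vee x^{(k-1)}\vee(x^{(k)}*y)$, $x\cdot y=x^{(0)}\vee\cdots\vee x^{(k-1)}\vee(x^{(k)}*y^{(0)})\vee y^{(1)}\vee\cdots\vee y^{(l)}$, $x\succ y=(x*y^{(0)})\vee y^{(1)}\vee\cdots\vee y^{(l)}$, with $*=\prec+\cdot+\succ$ and $|*z=z*|=z$. A $(k,l)$-quasi-shuffle is a surjection $\sigma:\{1,\dots,k+l\}\to\{1,\dots,n\}$ (for some $n$) with $\sigma(1)<\cdots<\sigma(k)$ and $\sigma(k+1)<\cdots<\sigma(k+l)$; $\mathrm{QSh}(k,l)$ is their set. Comb representations: the right-most branch of $t$ is the path from the root always going to the right-most child; let $v_1,\dots,v_k$ be its internal vertices (from the root up) and $F_i$ the (nonempty) forest of subtrees rooted at the children of $v_i$ other than its right-most child. Likewise let $w_1,\dots,w_l$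 be the internal vertices on the left-most branch of $s$ and $F_{k+j}$ the forest of subtrees rooted at the children of $w_j$ other than its left-most child. For $\sigma\in\mathrm{QSh}(k,l)$ with image $\{1,\dots,n\}$, $\sigma(t,s)$ is the tree built from a ladder of internal vertices $u_1$ (root), $u_2,\dots,u_n$, $u_{p+1}$ a child of $u_p$ and the ladder child of $u_n$ a leaf, where the children of $u_p$ are, from left to right: the trees of $F_i$ if $\sigma(i)=p$ for some $i\le k$, then the ladder child, then the trees of $F_{k+j}$ if $\sigma(k+j)=p$ for some $j\le l$. *)

(* Defs.v *)
From HB Require Import structures.
From mathcomp Require Import all_boot all_order all_algebra.
Set Implicit Arguments. Unset Strict Implicit. Unset Printing Implicit Defensive.
Import GRing.Theory.
Local Open Scope ring_scope.

(* Planar rooted trees.  [Node ts] is a vertex with children [ts]     *)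
(* (left to right); [Node [::]] is the one-leaf tree |, i.e. a leaf.  *)
Inductive tree := Node of seq tree.

Definition leaf : tree := Node [::].

Fixpoint encode (t : tree) : GenTree.tree unit :=
  let: Node ts := t in GenTree.Node 0 (map encode ts).

Fixpoint decode (g : GenTree.tree unit) : tree :=
  match g with
  | GenTree.Leaf _ => Node [::]
  | GenTree.Node _ gs => Node (map decode gs)
  end.

Fixpoint encodeK (t : tree) : decode (encode t) = t :=
  match t with
  | Node ts => f_equal Node
      ((fix aux (l : seq tree) : map decode (map encode l) = l :=
          match l with
          | [::] => erefl
          | a :: l' => f_equal2 cons (encodeK a) (aux l')
          end) ts)
  end.

HB.instance Definition _ := Equality.copy tree (can_type encodeK).

Fixpoint wf (t : tree) : bool :=
  let: Node ts := t in (size ts != 1%N) && all wf ts.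

Definition drop_last (T : Type) (s : seq T) := take (size s).-1 s.

Section Algebra.
Variable K : fieldType.

(* Elements of the K-vector space A with basis the trees, as formal    *)
(* linear combinations; two of them are equal in A iff all their       *)
(* coefficients agree ([veq]).                                         *)
Definition vsum := seq (K * tree).

Definition coef (v : vsum) (u : tree) : K :=
  \sum_(p <- v) (if p.2 == u then p.1 else 0).

Definition veq (v w : vsum) : Prop := forall u, coef v u = coef w u.

(* linear extension of a map on trees (grafting in a slot) *)
Definition graft (f : tree -> tree) (v : vsum) : vsum :=
  map (fun p => (p.1, f p.2)) v.

(* The product * = prec + dot + succ of the paper, extended bilinearly:
   for x = x0 v ... v xk and y = y0 v ... v yl (both different from |):
     x prec y = x0 v ... v x(k-1) v (xk * y)
     x dot  y = x0 v ... v x(k-1) v (xk * y0) v y1 v ... v yl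
     x succ y = (x * y0) v y1 v ... v yl
   and | * z = z * | = z.  [star_last y] below is [xk * y]. *)
Fixpoint star (x : tree) : tree -> vsum :=
  match x with
  | Node xs =>
    let star_last :=
      (fix f (l : seq tree) : tree -> vsum :=
         match l with
         | [::] => fun _ => [::]
         | [:: a] => star a
         | _ :: l' => f l'
         end) xs in
    fix go (y : tree) : vsum :=
      match y with
      | Node ys =>
        match xs, ys with
        | [::], _ => [:: (1, y)]
        | _, [::] => [:: (1, x)]
        | _, y0 :: ys' =>
            (* x prec y *)
            graft (fun z => Node (drop_last xs ++ [:: z])) (star_last y)
            (* x dot y *)
         ++ graft (fun z => Node (drop_last xs ++ z :: ys')) (star_last y0)
            (* x succ y *)
         ++ graft (fun z => Node (z :: ys')) (go y0)
        end
      end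
  end.

End Algebra.

Fixpoint rdepth (t : tree) : nat :=
  match t with
  | Node ts =>
    (fix f (l : seq tree) : nat :=
       match l with
       | [::] => 0%N
       | [:: a] => (rdepth a).+1
       | _ :: l' => f l'
       end) ts
  end.

Fixpoint ldepth (t : tree) : nat :=
  match t with
  | Node [::] => 0%N
  | Node (a :: _) => (ldepth a).+1
  end.

(* [F_1; ...; F_k]: forests hanging to the left of the right-most branch,
   from the root up *)
Fixpoint rforests (t : tree) : seq (seq tree) :=
  match t with
  | Node ts =>
    (fix f (l : seq tree) : seq (seq tree) :=
       match l with
       | [::] => [::]
       | [:: a] => drop_last ts :: rforests a
       | _ :: l' => f l'
       end) ts
  end.

(* [F_(k+1); ...; F_(k+l)]: forests hanging to the right of the left-most
   branch, from the root up *)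
Fixpoint lforests (t : tree) : seq (seq tree) :=
  match t with
  | Node [::] => [::]
  | Node (a :: rest) => rest :: lforests a
  end.

(* Quasi-shuffles.  Indices and values are 0-based: a (k,l)-quasi-     *)
(* shuffle is a map sig : 'I_(k+l) -> 'I_(k+l) increasing on {0..k-1}, *)
(* increasing on {k..k+l-1}, whose image is {0,...,n-1}, where         *)
(* n = #|image| (any surjection from k+l points onto {0..n-1} has      *)
(* n <= k+l, so this is exactly QSh(k,l) of the paper, shifted by 1).  *)
Section QSh.
Variables k l : nat.

Definition qsh_img (sg : {ffun 'I_(k + l) -> 'I_(k + l)}) : {set 'I_(k + l)} :=
  [set sg i | i : 'I_(k + l)].

Definition qsh_n (sg : {ffun 'I_(k + l) -> 'I_(k + l)}) : nat := #|qsh_img sg|.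

Definition is_qsh (sg : {ffun 'I_(k + l) -> 'I_(k + l)}) : bool :=
  [&& [forall i : 'I_(k + l), forall j : 'I_(k + l),
         ((i < j) && (j < k))%N ==> (val (sg i) < val (sg j))%N],
      [forall i : 'I_(k + l), forall j : 'I_(k + l),
         ((k <= i) && (i < j))%N ==> (val (sg i) < val (sg j))%N]
    & qsh_img sg == [set p : 'I_(k + l) | (p < qsh_n sg)%N]].

(* sigma(t,s), given the forests F_1..F_k (Ft) and F_(k+1)..F_(k+l) (Fs):
   a ladder u_0 (root), ..., u_(n-1); children of u_p: the trees of F_i
   if sigma(i) = p (i < k), then the ladder child, then the trees of
   F_(k+j) if sigma(k+j) = p. *)
Definition qsh_left (Ft : seq (seq tree)) (sg : {ffun 'I_(k + l) -> 'I_(k + l)})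
  (p : nat) : seq tree :=
  flatten [seq nth [::] Ft i | i : 'I_(k + l) <- enum 'I_(k + l) & (i < k)%N && (val (sg i) == p)].

Definition qsh_right (Fs : seq (seq tree)) (sg : {ffun 'I_(k + l) -> 'I_(k + l)})
  (p : nat) : seq tree :=
  flatten [seq nth [::] Fs (i - k) | i : 'I_(k + l) <- enum 'I_(k + l) & (k <= i)%N && (val (sg i) == p)].

Fixpoint ladder (Ft Fs : seq (seq tree)) (sg : {ffun 'I_(k + l) -> 'I_(k + l)})
  (m p : nat) : tree :=
  match m with
  | 0%N => leaf
  | m'.+1 => Node (qsh_left Ft sg p ++ ladder Ft Fs sg m' p.+1 :: qsh_right Fs sg p)
  end.

Definition qsh_tree (Ft Fs : seq (seq tree)) (sg : {ffun 'I_(k + l) -> 'I_(k + l)}) : tree :=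
  ladder Ft Fs sg (qsh_n sg) 0.

Definition qsh_sum (K : fieldType) (Ft Fs : seq (seq tree)) : vsum K :=
  [seq ((1 : K), qsh_tree Ft Fs sg) | sg <- enum [pred sg | is_qsh sg]].

End QSh.

(* Main.v *)
Require Import Defs.
From HB Require Import structures.
From mathcomp Require Import all_boot all_order all_algebra.
From mathcomp Require Import zify.
Set Implicit Arguments. Unset Strict Implicit. Unset Printing Implicit Defensive.
Import GRing.Theory.
Local Open Scope ring_scope.

Lemma rdepth_node x xs : rdepth (Node (x :: xs)) = (rdepth (last x xs)).+1.
Proof. by elim: xs x => [|b l IH] x //; rewrite -IH. Qed.

Lemma rforests_node x xs :
  rforests (Node (x :: xs)) = drop_last (x :: xs) :: rforests (last x xs).
Proof.
rewrite /=. move: (drop_last (x :: xs)) => D.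
by elim: xs x => [|b l IH] x //; apply: IH.
Qed.

Lemma drop_lastK (T : Type) (x : T) xs : drop_last (x :: xs) ++ [:: last x xs] = x :: xs.
Proof.
rewrite /drop_last [in RHS]lastI -cats1; congr (_ ++ _).
by rewrite lastI size_rcons /= -cats1 take_size_cat ?size_belast.
Qed.

Lemma star_node (K : fieldType) x xs y0 ys :
  star K (Node (x :: xs)) (Node (y0 :: ys)) =
  graft (fun z => Node (drop_last (x :: xs) ++ [:: z])) (star K (last x xs) (Node (y0 :: ys)))
  ++ graft (fun z => Node (drop_last (x :: xs) ++ z :: ys)) (star K (last x xs) y0)
  ++ graft (fun z => Node (z :: ys)) (star K (Node (x :: xs)) y0).
Proof.
rewrite [LHS]/=; congr (graft _ _ ++ graft _ _ ++ graft _ _).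
- by elim: xs x => [|b l IH] x //=.
- by elim: xs x => [|b l IH] x //=.
Qed.

Section V.
Variable K : fieldType.

Lemma coef_cat (v w : vsum K) u : coef (v ++ w) u = coef v u + coef w u.
Proof. by rewrite /coef big_cat. Qed.

Lemma veq_cat (v1 v2 w1 w2 : vsum K) : veq v1 w1 -> veq v2 w2 -> veq (v1 ++ v2) (w1 ++ w2).
Proof. by move=> h1 h2 u; rewrite !coef_cat h1 h2. Qed.

Lemma veq_trans (u v w : vsum K) : veq u v -> veq v w -> veq u w.
Proof. by move=> h1 h2 x; rewrite h1 h2. Qed.

Lemma veq_perm (v w : vsum K) : perm_eq v w -> veq v w.
Proof. by move=> h u; rewrite /coef (perm_big _ h). Qed.

Lemma coef_graft_S f (v : vsum K) (S : seq tree) u :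
  uniq S -> {subset map snd v <= S} ->
  coef (graft f v) u = \sum_(z <- S | f z == u) coef v z.
Proof.
move=> uS sub; rewrite /coef /graft big_map.
under [RHS]eq_bigr => z _ do rewrite /coef.
rewrite big_mkcond /= exchange_big /=.
apply: eq_big_seq => p pv.
have pS : p.2 \in S by apply: sub; apply: map_f.
rewrite big_mkcond (bigD1_seq p.2) //= eqxx big1 ?addr0 //.
by move=> z zp; rewrite eq_sym in zp; rewrite (negbTE zp) if_same.
Qed.

Lemma veq_graft f (v w : vsum K) : veq v w -> veq (graft f v) (graft f w).
Proof.
move=> h u.
rewrite (@coef_graft_S f v (undup (map snd (v ++ w)))) ?undup_uniq //; last first.
  by move=> z zv; rewrite mem_undup map_cat mem_cat zv.
rewrite (@coef_graft_S f w (undup (map snd (v ++ w)))) ?undup_uniq //; last first.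
  by move=> z zv; rewrite mem_undup map_cat mem_cat zv orbT.
by apply: eq_bigr => z _; rewrite h.
Qed.

End V.

Definition LL : bool * bool := (true, false).
Definition BB : bool * bool := (true, true).
Definition RR : bool * bool := (false, true).

Fixpoint words (k : nat) : nat -> seq (seq (bool * bool)) :=
  match k with
  | 0%N => fun l => [:: nseq l RR]
  | k'.+1 => fix wl (l : nat) :=
     match l with
     | 0%N => [:: nseq k LL]
     | l'.+1 => map (cons LL) (words k' l) ++ map (cons BB) (words k' l')
                ++ map (cons RR) (wl l')
     end
  end.

Lemma words0l l : words 0 l = [:: nseq l RR]. Proof. by []. Qed.
Lemma wordsk0 k : words k 0 = [:: nseq k LL]. Proof. by case: k. Qed.
Lemma wordsSS k l : words k.+1 l.+1 =
  map (cons LL) (words k l.+1) ++ map (cons BB) (words k l) ++ map (cons RR) (words k.+1 l).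
Proof. by []. Qed.

Fixpoint wtree (Ft Fs : seq (seq tree)) (cl cr : nat) (w : seq (bool * bool)) : tree :=
  match w with
  | [::] => leaf
  | c :: w' => Node ((if c.1 then nth [::] Ft cl else [::])
                 ++ wtree Ft Fs (cl + c.1) (cr + c.2) w'
                 :: (if c.2 then nth [::] Fs cr else [::]))
  end.

Lemma wtree_shl F Ft Fs cl cr w : wtree (F :: Ft) Fs cl.+1 cr w = wtree Ft Fs cl cr w.
Proof. by elim: w cl cr => [|c w IH] cl cr //=; rewrite addSn IH. Qed.

Lemma wtree_shr F Ft Fs cl cr w : wtree Ft (F :: Fs) cl cr.+1 w = wtree Ft Fs cl cr w.
Proof. by elim: w cl cr => [|c w IH] cl cr //=; rewrite addSn IH. Qed.

Lemma wtree_s s Ft cl : wtree Ft (lforests s) cl 0 (nseq (ldepth s) RR) = s.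
Proof.
suff: forall d s cl, ldepth s = d -> wtree Ft (lforests s) cl 0 (nseq d RR) = s by apply.
elim=> [|d IH] [[|a rest]] c //= [ed].
by rewrite addn0 wtree_shr IH.
Qed.

Lemma wtree_t t Fs cr : wtree (rforests t) Fs 0 cr (nseq (rdepth t) LL) = t.
Proof.
suff: forall d t cr, rdepth t = d -> wtree (rforests t) Fs 0 cr (nseq d LL) = t by apply.
elim=> [|d IH] [[|x xs]] c //; rewrite ?rdepth_node // => -[ed].
rewrite rforests_node /= addn0 wtree_shl IH //.
by rewrite drop_lastK.
Qed.

Fixpoint tsize (t : tree) : nat := let: Node ts := t in (sumn (map tsize ts)).+1.

Lemma tsize_mem x xs : x \in xs -> (tsize x < tsize (Node xs))%N.
Proof.
rewrite /= ltnS; elim: xs => [|y ys IH] //=; rewrite inE => /orP[/eqP->|/IH h].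
  exact: leq_addr.
exact: leq_trans h (leq_addl _ _).
Qed.

Definition wsum (K : fieldType) (ws : seq (seq (bool * bool))) Ft Fs : vsum K :=
  [seq ((1 : K), wtree Ft Fs 0 0 w) | w <- ws].

Lemma wsum_cat K ws1 ws2 Ft Fs : wsum K (ws1 ++ ws2) Ft Fs = wsum K ws1 Ft Fs ++ wsum K ws2 Ft Fs.
Proof. by rewrite /wsum map_cat. Qed.

Lemma wsum_L K ws F Ft Fs :
  wsum K (map (cons LL) ws) (F :: Ft) Fs = graft (fun z => Node (F ++ [:: z])) (wsum K ws Ft Fs).
Proof. by rewrite /wsum /graft -!map_comp; apply: eq_map => w /=; rewrite addn0 wtree_shl. Qed.

Lemma wsum_B K ws F G Ft Fs :
  wsum K (map (cons BB) ws) (F :: Ft) (G :: Fs) = graft (fun z => Node (F ++ z :: G)) (wsum K ws Ft Fs).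
Proof. by rewrite /wsum /graft -!map_comp; apply: eq_map => w /=; rewrite wtree_shl wtree_shr. Qed.

Lemma wsum_R K ws G Ft Fs :
  wsum K (map (cons RR) ws) Ft (G :: Fs) = graft (fun z => Node (z :: G)) (wsum K ws Ft Fs).
Proof. by rewrite /wsum /graft -!map_comp; apply: eq_map => w /=; rewrite addn0 wtree_shr. Qed.

Lemma star_words (K : fieldType) n t s : (tsize t + tsize s < n)%N ->
  veq (star K t s) (wsum K (words (rdepth t) (ldepth s)) (rforests t) (lforests s)).
Proof.
elim: n t s => // n IH [[|x xs]] s.
  by move=> _ u; rewrite /= /wsum /= wtree_s; case: s.
case: s => -[|y0 ys] hn.
  by move=> u; rewrite /= /wsum wordsk0 /= -[X in (_, X)](wtree_t _ [::] 0).
rewrite star_node rdepth_node rforests_node [ldepth (Node _)]/= [lforests (Node _)]/= wordsSS.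
rewrite !wsum_cat wsum_L wsum_B wsum_R.
have ax : (tsize (last x xs) < tsize (Node (x :: xs)))%N by apply: tsize_mem; exact: mem_last.
have ay : (tsize y0 < tsize (Node (y0 :: ys)))%N by apply: tsize_mem; exact: mem_head.
apply: veq_cat; last apply: veq_cat; apply: veq_graft.
- have := IH (last x xs) (Node (y0 :: ys)); rewrite [ldepth (Node _)]/= [lforests (Node _)]/=.
  by apply; lia.
- by apply: IH; lia.
- by have := IH (Node (x :: xs)) y0; rewrite rdepth_node rforests_node; apply; lia.
Qed.

Local Close Scope ring_scope.

Lemma card_ord_pred N (P : pred nat) : #|[set j : 'I_N | P j]| = count P (iota 0 N).
Proof.
rewrite -sum1_card (eq_bigl (fun j : 'I_N => P j)); last by move=> j; rewrite inE.
by rewrite -(big_mkord P (fun _ => 1%N)) sum1_count /index_iota subn0.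
Qed.

Lemma count_range a b N : count (fun j => (a <= j) && (j < b)) (iota 0 N) = minn b N - a.
Proof.
elim: N => [|N IH]; first by rewrite minn0.
rewrite -addn1 iotaD count_cat IH /= addn0.
by case: (leqP a N) => h1; case: (ltnP N b) => h2 /=; lia.
Qed.

Lemma card_range N a b : b <= N -> #|[set j : 'I_N | (a <= j) && (j < b)]| = b - a.
Proof. by move=> h; rewrite (card_ord_pred N (fun j => (a <= j) && (j < b))) count_range; congr (_ - _); lia. Qed.

Section Q.
Variables k l : nat.
Local Notation N := (k + l).
Implicit Types sg : {ffun 'I_N -> 'I_N}.

Definition inD (D : pred nat) sg (p : nat) : bool :=
  [exists j : 'I_N, D j && (val (sg j) == p)].

Definition monoD (D : pred nat) sg :=
  forall i j : 'I_N, D i -> D j -> (i < j)%N -> (sg i < sg j)%N.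

Lemma monoD_inj D sg : monoD D sg -> forall i j : 'I_N, D i -> D j -> val (sg i) = val (sg j) -> i = j.
Proof.
move=> m i j Di Dj e; apply: val_inj => /=.
case: (ltngtP i j) => // h.
  by have := m _ _ Di Dj h; rewrite e ltnn.
by have := m _ _ Dj Di h; rewrite e ltnn.
Qed.

Lemma count_inD D sg : monoD D sg -> forall x,
  count (inD D sg) (iota 0 x) = #|[set j : 'I_N | D j && (sg j < x)]|.
Proof.
move=> m; elim=> [|x IH].
  by apply/esym/eqP; rewrite cards_eq0; apply/eqP/setP => j; rewrite !inE ltn0 andbF.
rewrite -addn1 iotaD count_cat IH /= addn0.
have -> : [set j : 'I_N | D j && (sg j < x + 1)] =
   [set j : 'I_N | D j && (sg j < x)] :|: [set j : 'I_N | D j && (val (sg j) == x)].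
  apply/setP => j; rewrite !inE addn1 ltnS leq_eqVlt.
  by case: (D j); rewrite //= orbC.
rewrite cardsU.
have -> : [set j : 'I_N | D j && (sg j < x)] :&: [set j : 'I_N | D j && (val (sg j) == x)] = set0.
  apply/setP => j; rewrite !inE.
  by case: (D j) => //=; case: eqP => [->|]; rewrite ?ltnn ?andbF.
rewrite cards0 subn0; congr (_ + _)%N.
rewrite /inD; case: existsP => [[j0 /andP[Dj0 /eqP e0]]|ne].
  rewrite (_ : [set _ | _] = [set j0]) ?cards1 //.
  apply/setP => j; rewrite !inE; apply/idP/idP.
    move=> /andP[Dj /eqP ej]; apply/eqP; apply: (monoD_inj m) => //; by rewrite ej e0.
  by move=> /eqP->; rewrite Dj0 e0 eqxx.
apply/esym/eqP; rewrite cards_eq0; apply/eqP/setP => j; rewrite !inE.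
by apply/negP => h; apply: ne; exists j.
Qed.

Lemma rankD D sg : monoD D sg -> forall i : 'I_N, D i ->
  count (inD D sg) (iota 0 (sg i)) = #|[set j : 'I_N | D j && (j < i)]|.
Proof.
move=> m i Di; rewrite count_inD //; apply: eq_card => j; rewrite !inE.
case Dj: (D j) => //=.
case: (ltngtP j i) => h.
- by rewrite m.
- by apply/negbTE; rewrite -leqNgt ltnW // m.
- by rewrite (val_inj h) ltnn.
Qed.

End Q.

Section NP.
Variable T : Type.
Variable P : pred T.

Fixpoint nthpos (w : seq T) (j : nat) : nat :=
  match w with
  | [::] => 0
  | c :: w' => if P c then (if j is j'.+1 then (nthpos w' j').+1 else 0)
               else (nthpos w' j).+1
  end.

Lemma nthpos_size w j : j < count P w -> nthpos w j < size w.
Proof.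
elim: w j => [|c w IH] j //=; case: (P c) => /=; last by move/IH.
by case: j => [|j] //; rewrite add1n ltnS => /IH.
Qed.

Lemma nthpos_P x0 w j : j < count P w -> P (nth x0 w (nthpos w j)).
Proof.
elim: w j => [|c w IH] j //=; case Pc: (P c) => /=; last by move/IH.
by case: j => [|j] //; rewrite add1n ltnS => /IH.
Qed.

Lemma nthpos_count w j : j < count P w -> count P (take (nthpos w j) w) = j.
Proof.
elim: w j => [|c w IH] j //=; case Pc: (P c) => /=.
  case: j => [|j] //=; rewrite add1n ltnS Pc => /IH ->; by rewrite add1n.
by rewrite add0n => /IH e; rewrite /= Pc e.
Qed.

Lemma nthposE x0 w p : p < size w -> P (nth x0 w p) -> nthpos w (count P (take p w)) = p.
Proof.
elim: w p => [|c w IH] p //=; case: p => [|p] /=.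
  by move=> _ ->.
by rewrite ltnS => hp hP; case: (P c) => /=; rewrite ?add1n IH.
Qed.

Lemma count_take_mono w m m' : m <= m' -> count P (take m w) <= count P (take m' w).
Proof.
move=> h; rewrite -(take_takel w h).
by rewrite -{2}(cat_take_drop m (take m' w)) count_cat leq_addr.
Qed.

Lemma count_take_le w m : count P (take m w) <= count P w.
Proof. by rewrite -{2}(cat_take_drop m w) count_cat leq_addr. Qed.

Lemma count_take_S x0 w p : p < size w ->
  count P (take p.+1 w) = count P (take p w) + P (nth x0 w p).
Proof. by move=> h; rewrite (take_nth x0 h) -cats1 count_cat /= addn0. Qed.

Lemma nthpos_mono w j1 j2 : j1 < j2 -> j2 < count P w -> nthpos w j1 < nthpos w j2.
Proof.
move=> h12 h2; rewrite ltnNge; apply/negP => h.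
have := count_take_mono w h; rewrite !nthpos_count //; last exact: ltn_trans h2.
by rewrite leqNgt h12.
Qed.

Lemma count_take_lt x0 w p : p < size w -> P (nth x0 w p) -> count P (take p w) < count P w.
Proof.
move=> hp hP; apply: (@leq_trans (count P (take p.+1 w))); last exact: count_take_le.
by rewrite (count_take_S x0 hp) hP addn1.
Qed.

End NP.

Definition pL : pred (bool * bool) := fun c => c.1.
Definition pR : pred (bool * bool) := fun c => c.2.

Definition validw (k l : nat) (w : seq (bool * bool)) : bool :=
  [&& all (fun c => c.1 || c.2) w, count pL w == k & count pR w == l].

Lemma size_validw k l w : validw k l w -> size w <= k + l.
Proof.
case/and3P => + /eqP <- /eqP <-.
elim: w => [|c w IH] //=; case: c => [[] []] //= h; have := IH h; rewrite /pL /pR /=; lia.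
Qed.

Lemma validw_cons k l c w : c.1 || c.2 -> validw k l w -> validw (c.1 + k) (c.2 + l) (c :: w).
Proof. by rewrite /validw /= /pL /pR => -> /and3P[-> /eqP-> /eqP->]; rewrite !eqxx. Qed.

Lemma words_valid k l w : w \in words k l -> validw k l w.
Proof.
elim: k l w => [|k IHk] l w.
  rewrite words0l inE => /eqP ->; rewrite /validw.
  by elim: l => [|l IH] //=.
elim: l w => [|l IHl] w.
  rewrite wordsk0 inE => /eqP ->; rewrite /validw.
  by elim: (k.+1) => [|m IH] //=.
rewrite wordsSS !mem_cat => /or3P[] /mapP[w' h ->].
- exact: (validw_cons (c := LL) _ (IHk _ _ h)).
- exact: (validw_cons (c := BB) _ (IHk _ _ h)).
- exact: (validw_cons (c := RR) _ (IHl _ h)).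
Qed.

Lemma valid_words k l w : validw k l w -> w \in words k l.
Proof.
elim: w k l => [|c w IH] k l.
  by case/and3P => _ /eqP <- /eqP <-.
case/and3P => /= /andP[cne aw]; rewrite /pL /pR.
case: c cne => [[] []] //= _.
- case: k => [|k] //; case: l => [|l] //; rewrite !add1n !eqSS => e1 e2.
  by rewrite wordsSS !mem_cat; apply/or3P; apply: Or32; apply: map_f; apply: IH; rewrite /validw aw e1 e2.
- case: k => [|k] //; rewrite !add1n !add0n eqSS => e1 e2.
  have hw : w \in words k l by apply: IH; rewrite /validw aw e1 e2.
  case: l e2 hw => [|l] e2 hw.
    by rewrite wordsk0 in hw *; rewrite inE in hw; rewrite (eqP hw) inE.
  by rewrite wordsSS !mem_cat; apply/or3P; apply: Or31; apply: map_f.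
- case: l => [|l] //; rewrite !add1n !add0n eqSS => e1 e2.
  have hw : w \in words k l by apply: IH; rewrite /validw aw e1 e2.
  case: k e1 hw => [|k] e1 hw.
    by rewrite words0l in hw *; rewrite inE in hw; rewrite (eqP hw) inE.
  by rewrite wordsSS !mem_cat; apply/or3P; apply: Or33; apply: map_f.
Qed.

Lemma words_uniq k l : uniq (words k l).
Proof.
elim: k l => [|k IHk] l; first by [].
elim: l => [|l IHl]; first by [].
rewrite wordsSS !cat_uniq !map_inj_uniq //; try by move=> ? ? [].
rewrite IHk IHl IHk /= andbT.
apply/andP; split; apply/hasPn => w; rewrite ?mem_cat.
  by case/orP => /mapP[w' _ ->]; apply/negP => /mapP[? _ []].
by move=> /mapP[w' _ ->]; apply/negP => /mapP[? _ []].
Qed.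

Section Q2.
Variables k l : nat.
Local Notation N := (k + l).
Implicit Types sg : {ffun 'I_N -> 'I_N}.

Definition DL : pred nat := fun j => j < k.
Definition DR : pred nat := fun j => k <= j.

Lemma qsh_monoL sg : is_qsh sg -> monoD DL sg.
Proof.
case/and3P => /forallP h _ _ i j Di Dj ij.
by have /forallP/(_ j)/implyP := h i; apply; rewrite ij.
Qed.

Lemma qsh_monoR sg : is_qsh sg -> monoD DR sg.
Proof.
case/and3P => _ /forallP h _ i j Di Dj ij.
by have /forallP/(_ j)/implyP := h i; apply; rewrite ij; move: Di; rewrite /DR => ->.
Qed.

Lemma qsh_n_le sg : qsh_n sg <= N.
Proof. by rewrite /qsh_n; apply: leq_trans (max_card _) _; rewrite card_ord. Qed.

Lemma qsh_lt sg : is_qsh sg -> forall i, sg i < qsh_n sg.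
Proof.
case/and3P => _ _ /eqP h i.
have : sg i \in qsh_img sg by apply: imset_f.
by rewrite h inE.
Qed.

Lemma qsh_surj sg : is_qsh sg -> forall p, p < qsh_n sg -> exists i, val (sg i) = p.
Proof.
case/and3P => _ _ /eqP h p hp.
have hpN : p < N by apply: leq_trans hp (qsh_n_le sg).
have : Ordinal hpN \in qsh_img sg by rewrite h inE.
by case/imsetP => i _ e; exists i; rewrite -e.
Qed.

Lemma rankL sg : is_qsh sg -> forall i : 'I_N, i < k -> count (inD DL sg) (iota 0 (sg i)) = i.
Proof.
move=> q i ik; rewrite rankD //; last exact: qsh_monoL.
rewrite -[RHS]subn0 -(card_range 0 (ltnW (ltn_ord i))).
apply: eq_card => j; rewrite !inE /DL /=.
by case: (ltnP j i) => h; rewrite ?andbF ?andbT // (ltn_trans h ik).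
Qed.

Lemma rankR sg : is_qsh sg -> forall i : 'I_N, k <= i -> count (inD DR sg) (iota 0 (sg i)) = i - k.
Proof.
move=> q i ik; rewrite rankD //; last exact: qsh_monoR.
by rewrite -(card_range k (ltnW (ltn_ord i))).
Qed.

Definition wordOf sg : seq (bool * bool) :=
  [seq (inD DL sg p, inD DR sg p) | p <- iota 0 (qsh_n sg)].

Lemma count_wordOfL sg p : p <= qsh_n sg ->
  count pL (take p (wordOf sg)) = count (inD DL sg) (iota 0 p).
Proof. by move=> h; rewrite /wordOf -map_take take_iota (minn_idPl h) count_map. Qed.

Lemma count_wordOfR sg p : p <= qsh_n sg ->
  count pR (take p (wordOf sg)) = count (inD DR sg) (iota 0 p).
Proof. by move=> h; rewrite /wordOf -map_take take_iota (minn_idPl h) count_map. Qed.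

Lemma wordOf_valid sg : is_qsh sg -> validw k l (wordOf sg).
Proof.
move=> q; apply/and3P; split.
- apply/allP => c /mapP[p]; rewrite mem_iota add0n => /(qsh_surj q)[i ei] ->.
  rewrite /inD /=; case: (ltnP i k) => h.
    by apply/orP; left; apply/existsP; exists i; rewrite /DL h ei eqxx.
  by apply/orP; right; apply/existsP; exists i; rewrite /DR h ei eqxx.
- rewrite -(take_size (wordOf sg)) size_map size_iota count_wordOfL //.
  rewrite count_inD; last exact: qsh_monoL.
  rewrite -[k in _ == k]subn0 -(card_range 0 (leq_addr l k)); apply/eqP/eq_card => j.
  by rewrite !inE /DL /= (qsh_lt q) andbT.
- rewrite -(take_size (wordOf sg)) size_map size_iota count_wordOfR //.
  rewrite count_inD; last exact: qsh_monoR.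
  rewrite -[l in _ == l](addKn k) -(card_range k (leqnn N)); apply/eqP/eq_card => j.
  by rewrite !inE /DR /= (qsh_lt q) ltn_ord !andbT.
Qed.

Lemma qsh_left_eq sg Ft p : is_qsh sg ->
  qsh_left Ft sg p = if inD DL sg p then nth [::] Ft (count (inD DL sg) (iota 0 p)) else [::].
Proof.
move=> q; rewrite /qsh_left /inD; case: existsP => [[j0 /andP[Dj0 /eqP e0]]|ne].
  rewrite (@eq_filter _ _ (pred1 j0)); last first.
    move=> i /=; apply/idP/eqP => [/andP[Di /eqP ei]|->]; last by move: Dj0; rewrite /DL => ->; rewrite e0 eqxx.
    by apply: (monoD_inj (qsh_monoL q)) => //; exact: (etrans ei (esym e0)).
  by rewrite filter_pred1_uniq ?enum_uniq ?mem_enum //= cats0 -e0 rankL.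
rewrite (@eq_filter _ _ pred0) ?filter_pred0 //.
by move=> i /=; apply/negP => h; apply: ne; exists i.
Qed.

Lemma qsh_right_eq sg Fs p : is_qsh sg ->
  qsh_right Fs sg p = if inD DR sg p then nth [::] Fs (count (inD DR sg) (iota 0 p)) else [::].
Proof.
move=> q; rewrite /qsh_right /inD; case: existsP => [[j0 /andP[Dj0 /eqP e0]]|ne].
  rewrite (@eq_filter _ _ (pred1 j0)); last first.
    move=> i /=; apply/idP/eqP => [/andP[Di /eqP ei]|->]; last by move: Dj0; rewrite /DR => ->; rewrite e0 eqxx.
    by apply: (monoD_inj (qsh_monoR q)) => //; exact: (etrans ei (esym e0)).
  by rewrite filter_pred1_uniq ?enum_uniq ?mem_enum //= cats0 -e0 rankR.
rewrite (@eq_filter _ _ pred0) ?filter_pred0 //.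
by move=> i /=; apply/negP => h; apply: ne; exists i.
Qed.

Lemma ladder_eq sg Ft Fs : is_qsh sg -> forall m p,
  ladder Ft Fs sg m p = wtree Ft Fs (count (inD DL sg) (iota 0 p)) (count (inD DR sg) (iota 0 p))
     [seq (inD DL sg q, inD DR sg q) | q <- iota p m].
Proof.
move=> q; elim=> [|m IH] p //=.
rewrite qsh_left_eq // qsh_right_eq // IH -addn1 iotaD !count_cat /= !addn0.
by congr (Node (_ ++ _ :: _)); case: (inD DL sg p).
Qed.

Lemma qsh_tree_eq sg Ft Fs : is_qsh sg -> qsh_tree Ft Fs sg = wtree Ft Fs 0 0 (wordOf sg).
Proof. by move=> q; rewrite /qsh_tree ladder_eq. Qed.

Definition sgOf (w : seq (bool * bool)) : {ffun 'I_N -> 'I_N} :=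
  [ffun i : 'I_N => insubd i (if (i < k)%N then nthpos pL w i else nthpos pR w (i - k))].

Lemma val_sgOf w : validw k l w -> forall i : 'I_N,
  val (sgOf w i) = if (i < k)%N then nthpos pL w i else nthpos pR w (i - k).
Proof.
move=> v i; have sw := size_validw v; case/and3P: v => _ /eqP cL /eqP cR.
rewrite ffunE val_insubd; case: ifP => //; case: ifP => h.
  by rewrite (leq_trans (nthpos_size _) sw) // cL.
by rewrite (leq_trans (nthpos_size _) sw) // cR; move: (ltn_ord i) h; lia.
Qed.

Lemma sgOf_img w : validw k l w -> qsh_img (sgOf w) = [set p : 'I_N | (p < size w)%N].
Proof.
move=> v; have sw := size_validw v; have v' := v.
case/and3P: v' => aw /eqP cL /eqP cR.
apply/setP => p; rewrite inE; apply/imsetP/idP => [[i _ ->]|hp].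
  rewrite val_sgOf //; case: ifP => h; apply: nthpos_size.
    by rewrite cL.
  by rewrite cR; move: (ltn_ord i) h; lia.
have /orP[h1|h2] : (nth (false, false) w p).1 || (nth (false, false) w p).2.
    by apply: (allP aw); rewrite mem_nth.
  have hj : (count pL (take p w) < k)%N by move: (count_take_lt hp h1); rewrite cL.
  have hjN : (count pL (take p w) < N)%N by apply: leq_trans hj (leq_addr _ _).
  exists (Ordinal hjN) => //; apply: val_inj; rewrite val_sgOf //= hj.
  by rewrite (nthposE hp h1).
have hj : (count pR (take p w) < l)%N by move: (count_take_lt hp h2); rewrite cR.
have hjN : (k + count pR (take p w) < N)%N by rewrite ltn_add2l.
exists (Ordinal hjN) => //; apply: val_inj; rewrite val_sgOf //= ltnNge leq_addr /= addKn.
by rewrite (nthposE hp h2).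
Qed.

Lemma sgOf_n w : validw k l w -> qsh_n (sgOf w) = size w.
Proof.
move=> v; rewrite /qsh_n sgOf_img // -[RHS]subn0 -(card_range 0 (size_validw v)).
by apply: eq_card => j; rewrite !inE.
Qed.

Lemma sgOf_qsh w : validw k l w -> is_qsh (sgOf w).
Proof.
move=> v; have v' := v; case/and3P: v' => aw /eqP cL /eqP cR.
apply/and3P; split.
- apply/forallP => i; apply/forallP => j; apply/implyP => /andP[ij jk].
  rewrite !val_sgOf // jk (ltn_trans ij jk); apply: nthpos_mono => //; by rewrite cL.
- apply/forallP => i; apply/forallP => j; apply/implyP => /andP[ki ij].
  rewrite !val_sgOf // (ltnNge i k) ki /= (ltnNge j k) (leq_trans ki (ltnW ij)) /=.
  apply: nthpos_mono; first by move: ki ij; lia.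
  by rewrite cR; move: (ltn_ord j) ki ij; lia.
- by rewrite sgOf_n // sgOf_img.
Qed.

Lemma wordOf_sgOf w : validw k l w -> wordOf (sgOf w) = w.
Proof.
move=> v; have v' := v; case/and3P: v' => aw /eqP cL /eqP cR.
rewrite /wordOf sgOf_n // -[RHS](mkseq_nth (false, false)) /mkseq.
apply/eq_in_map => p; rewrite mem_iota add0n => hp.
have HL : inD DL (sgOf w) p = (nth (false, false) w p).1.
  apply/existsP/idP => [[i /andP[Di /eqP <-]]|h1].
    have Di' : (i < k)%N := Di.
    rewrite val_sgOf // Di'; apply: (nthpos_P (P := pL)); by rewrite cL.
  have hj : (count pL (take p w) < k)%N by move: (count_take_lt hp h1); rewrite cL.
  have hjN : (count pL (take p w) < N)%N by apply: leq_trans hj (leq_addr _ _).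
  exists (Ordinal hjN); rewrite /DL /= hj val_sgOf //= hj.
  by rewrite (nthposE hp h1).
have HR : inD DR (sgOf w) p = (nth (false, false) w p).2.
  apply/existsP/idP => [[i /andP[Di /eqP <-]]|h2].
    have Di' : (k <= i)%N := Di.
    rewrite val_sgOf // (ltnNge i k) Di' /=; apply: (nthpos_P (P := pR)).
    by rewrite cR; move: (ltn_ord i) Di'; lia.
  have hj : (count pR (take p w) < l)%N by move: (count_take_lt hp h2); rewrite cR.
  have hjN : (k + count pR (take p w) < N)%N by rewrite ltn_add2l.
  exists (Ordinal hjN); rewrite /DR /= leq_addr val_sgOf //= (ltnNge _ k) leq_addr /= addKn.
  by rewrite (nthposE hp h2).
by rewrite HL HR; case: (nth _ _ _).
Qed.

Lemma sgOf_wordOf sg : is_qsh sg -> sgOf (wordOf sg) = sg.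
Proof.
move=> q; have v := wordOf_valid q.
have sz : size (wordOf sg) = qsh_n sg by rewrite size_map size_iota.
apply/ffunP => i; apply: val_inj; rewrite val_sgOf //.
have hp : (sg i < size (wordOf sg))%N by rewrite sz qsh_lt.
case: ifP => h.
  rewrite -{1}(rankL q h) -count_wordOfL ?(ltnW (qsh_lt q i)) //.
  rewrite (nthposE (x0 := (false, false))) // /pL (nth_map 0) ?size_iota ?qsh_lt // nth_iota ?qsh_lt //=.
  by apply/existsP; exists i; rewrite /DL h eqxx.
have h' : (k <= i)%N by rewrite leqNgt h.
rewrite -(rankR q h') -count_wordOfR ?(ltnW (qsh_lt q i)) //.
rewrite (nthposE (x0 := (false, false))) // /pR (nth_map 0) ?size_iota ?qsh_lt // nth_iota ?qsh_lt //=.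
by apply/existsP; exists i; rewrite /DR leqNgt h eqxx.
Qed.

Lemma qsh_perm : perm_eq [seq wordOf sg | sg <- enum [pred sg | is_qsh sg]] (words k l).
Proof.
apply: uniq_perm; last 1 first.
- move=> w; apply/mapP/idP => [[sg]|hw].
    by rewrite mem_enum => /= q ->; apply: valid_words; apply: wordOf_valid.
  have v := words_valid hw.
  exists (sgOf w); last by rewrite wordOf_sgOf.
  by rewrite mem_enum inE sgOf_qsh.
- rewrite map_inj_in_uniq ?enum_uniq // => sg1 sg2.
  rewrite !mem_enum /= => q1 q2 e.
  by rewrite -(sgOf_wordOf q1) e sgOf_wordOf.
- exact: words_uniq.
Qed.

End Q2.

Lemma wsum_qsh (K : fieldType) k l Ft Fs :
  veq (wsum K (words k l) Ft Fs) (qsh_sum k l K Ft Fs).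
Proof.
have -> : qsh_sum k l K Ft Fs =
   wsum K [seq wordOf sg | sg <- enum [pred sg : {ffun 'I_(k + l) -> 'I_(k + l)} | is_qsh sg]] Ft Fs.
  rewrite /qsh_sum /wsum -map_comp; apply/eq_in_map => sg; rewrite mem_enum inE => q /=.
  by rewrite qsh_tree_eq.
apply: veq_perm; apply: perm_map; rewrite perm_sym; exact: qsh_perm.
Qed.

Theorem mainTheorem8 (K : fieldType) (t s : tree) :
  wf t -> wf s -> t != leaf -> s != leaf ->
  veq (star K t s) (qsh_sum (rdepth t) (ldepth s) K (rforests t) (lforests s)).
Proof.
move=> _ _ _ _.
have h1 := @star_words K _ t s (ltnSn _).
have h2 := wsum_qsh K (rdepth t) (ldepth s) (rforests t) (lforests s).
by move=> u; rewrite h1 h2.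
Qed.
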